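(* Let $n\ge 1$. As polynomials in the indeterminates $x$ and $y$ with coefficients in $\mathbb{Q}[\mathfrak{S}_n]$, \[\rho(x)\rho(y)=\rho(xy),\qquad \overline{\rho}(x)\overline{\rho}(y)=\overline{\rho}(xy),\qquad \overline{\rho}(x)\rho(y)=\overline{\rho}(xy),\qquad \rho(x)\overline{\rho}(y)=\rho(xy),\] where $\rho(x)=\sum_{\pi\in\mathfrak{S}_n}\Omega'(\pi;x/2)\,\pi$ and $\overline{\rho}(x)=\sum_{\pi\in\mathfrak{S}_n}\overline{\Omega}'(\pi;x/2)\,\pi$.
   Context: $\mathfrak{S}_n$ is the symmetric group on $[n]=\{1,\dots,n\}$, permutations are written as words $(\pi(1),\dots,\pi(n))$, and multiplication in the group algebra $\mathbb{Q}[\mathfrak{S}_n]$ is composition: $(\sigma\tau)(i)=\sigma(\tau(i))$. Let $Z$ be a finite totally ordered set each of whose elements is declared either ''plus-type'' or ''minus-type''. For $\pi\in\mathfrak{S}_n$ let $N(\pi;Z)$ be the number of sequences $(a_1,\dots,a_n)\in Z^n$ with $a_1\le a_2\le\dots\le a_n$ such that for every $s\in[n-1]$: if $\pi(s)<\pi(s+1)$ then $a_s<a_{s+1}$ or ($a_s=a_{s+1}$ and $a_s$ is plus-type); if $\pi(s)>\pi(s+1)$ then $a_s<a_{s+1}$ or ($a_s=a_{s+1}$ and $a_s$ is minus-type). For a positive integer $k$ define the enriched order polynomial $\Omega'(\pi;k)=N(\pi;Z)$ with $Z=\{\bar1<1<\bar2<2<\dots<\bar k<k\}$, and the exterior enriched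 order polynomial $\overline{\Omega}'(\pi;k)=N(\pi;Z)$ with $Z=\{0<\bar1<1<\bar2<2<\dots<\overline{k-1}<k-1<\bar k\}$; here the elements $0$ and $j$ are plus-type and the barred elements $\bar j$ are minus-type. Each of these is, as a function of the positive integer $k$, the restriction of a unique polynomial in $k$ with rational coefficients, denoted by the same symbol; this polynomial is evaluated at $x/2$ above. *)

(* Defs.v *)
From mathcomp Require Import all_boot all_order all_algebra all_fingroup.
Set Implicit Arguments. Unset Strict Implicit. Unset Printing Implicit Defensive.
Import GRing.Theory.
Local Open Scope ring_scope.

(* A finite totally ordered set Z of size m is modelled by 'I_m with its
   natural order; [plus z] says whether z is plus-type (else minus-type). *)

(* N(pi;Z): number of weakly increasing a : [n] -> Z satisfying the
   ascent/descent compatibility conditions.  Positions are 0-based. *)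
Definition Ncount (n m : nat) (plus : 'I_m -> bool) (pi : 'S_n) : nat :=
  #|[set a : {ffun 'I_n -> 'I_m} |
     [forall s : 'I_n, forall t : 'I_n, (nat_of_ord t == (nat_of_ord s).+1)%N ==>
       [&& (a s <= a t)%N,
           ((pi s < pi t)%N ==>
              ((a s < a t)%N || ((a s == a t) && plus (a s)))) &
           ((pi t < pi s)%N ==>
              ((a s < a t)%N || ((a s == a t) && ~~ plus (a s))))]]]|.

(* Z = {1bar < 1 < 2bar < 2 < ... < kbar < k}: index 2(j-1) is jbar (minus),
   index 2(j-1)+1 is j (plus). *)
Definition Omega' (n : nat) (pi : 'S_n) (k : nat) : nat :=
  Ncount (fun z : 'I_(2 * k) => odd z) pi.

(* Z = {0 < 1bar < 1 < ... < (k-1)bar < k-1 < kbar}: index 0 is 0 (plus),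
   index 2j-1 is jbar (minus), index 2j is j (plus). *)
Definition Omega'bar (n : nat) (pi : 'S_n) (k : nat) : nat :=
  Ncount (fun z : 'I_(2 * k) => ~~ odd z) pi.

Definition interpolates (P : {poly rat}) (f : nat -> nat) : Prop :=
  forall k : nat, (0 < k)%N -> P.[k%:R] = (f k)%:R.

(* Bivariate polynomials Q[x,y] as {poly {poly rat}}: x is the inner
   variable, y the outer one. *)
Definition xvar : {poly {poly rat}} := ('X)%:P.
Definition yvar : {poly {poly rat}} := 'X.
Definition half2 : {poly {poly rat}} := ((2%:R : rat)^-1)%:P%:P.

Definition ev2 (P : {poly rat}) (t : {poly {poly rat}}) : {poly {poly rat}} :=
  (map_poly (fun c : rat => c%:P%:P) P).[t].

(* Composition in S_n as in the paper: (sigma tau)(i) = sigma (tau i).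
   In MathComp, (tau * sigma)%g x = sigma (tau x). *)
Definition pcomp (n : nat) (sigma tau : 'S_n) : 'S_n := (tau * sigma)%g.

(* Coefficient of pi in (sum_s f s . s)(sum_t g t . t) in Q[x,y][S_n]. *)
Definition gprod_coef (n : nat) (f g : 'S_n -> {poly {poly rat}}) (pi : 'S_n)
  : {poly {poly rat}} :=
  \sum_(s : 'S_n) \sum_(t : 'S_n | pcomp s t == pi) f s * g t.

(* Main.v *)
Require Import Defs.
From mathcomp Require Import all_boot all_order all_algebra all_fingroup.
From mathcomp Require Import zify.
Set Implicit Arguments. Unset Strict Implicit. Unset Printing Implicit Defensive.
Import GRing.Theory.

Definition key (n m : nat) (plus : 'I_m -> bool) (g : {ffun 'I_n -> 'I_m}) (i : 'I_n) : nat :=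
  g i * n + (if plus (g i) then (i : nat) else n.-1 - i).

Definition CM (n m : nat) (plus : 'I_m -> bool) (g : {ffun 'I_n -> 'I_m}) (pi : 'S_n) : bool :=
  [forall u : 'I_n, forall v : 'I_n, (u < v) ==> (key plus g (pi u) < key plus g (pi v))].

Lemma tb_lt (n : nat) (b : bool) (i : 'I_n) : (if b then (i : nat) else n.-1 - i) < n.
Proof. have := ltn_ord i; case: b; lia. Qed.

Lemma key_lt_iff (n m : nat) (plus : 'I_m -> bool) (g : {ffun 'I_n -> 'I_m}) (i j : 'I_n) :
  (key plus g i < key plus g j) =
  (g i < g j) || ((g i == g j) &&
     ((if plus (g i) then (i : nat) else n.-1 - i) < (if plus (g i) then (j : nat) else n.-1 - j))).
Proof.
rewrite /key; have := tb_lt (plus (g i)) i; have := tb_lt (plus (g j)) j.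
case: (ltngtP (g i) (g j)) => [lt|gt|/val_inj eq] /=.
- move=> h1 h2; rewrite /=; apply/idP; nia.
- move=> h1 h2.
  have ne : (g i == g j) = false by apply/negbTE; rewrite -val_eqE /= neq_ltn gt orbT.
  rewrite ne /=; apply/negbTE/negP => h; nia.
- rewrite eq eqxx /=; move=> _ _; rewrite ltn_add2l; done.
Qed.

Lemma key_inj (n m : nat) (plus : 'I_m -> bool) (g : {ffun 'I_n -> 'I_m}) :
  injective (key plus g).
Proof.
move=> i j e.
have h1 : ~~ (key plus g i < key plus g j) by rewrite e ltnn.
have h2 : ~~ (key plus g j < key plus g i) by rewrite e ltnn.
rewrite key_lt_iff in h1; rewrite key_lt_iff in h2.
case: (ltngtP (g i) (g j)) h1 h2 => //= [] /val_inj eq; rewrite eq eqxx /= => h1 h2.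
apply: ord_inj; move: h1 h2; case: (plus (g j)); have := ltn_ord i; have := ltn_ord j; lia.
Qed.

Definition rank (n m : nat) (plus : 'I_m -> bool) (g : {ffun 'I_n -> 'I_m}) (i : 'I_n) : nat :=
  #|[set j | key plus g j < key plus g i]|.

Lemma rank_lt (n m : nat) (plus : 'I_m -> bool) (g : {ffun 'I_n -> 'I_m}) (i j : 'I_n) :
  key plus g i < key plus g j -> rank plus g i < rank plus g j.
Proof.
move=> lt; apply: proper_card; apply/properP; split.
  apply/subsetP => x; rewrite !inE => h; exact: ltn_trans h lt.
by exists i; rewrite !inE ?lt ?ltnn.
Qed.

Lemma rank_ltn (n m : nat) (plus : 'I_m -> bool) (g : {ffun 'I_n -> 'I_m}) (i : 'I_n) :
  rank plus g i < n.
Proof.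
rewrite /rank -[X in _ < X]card_ord; apply: proper_card; apply/properP; split.
  exact: subset_predT.
by exists i; rewrite ?inE ?ltnn.
Qed.

Lemma rank_inj (n m : nat) (plus : 'I_m -> bool) (g : {ffun 'I_n -> 'I_m}) :
  injective (fun i => Ordinal (rank_ltn plus g i)).
Proof.
move=> i j /(congr1 val) /= e; apply/eqP; apply/negPn/negP => ne.
have nk : key plus g i != key plus g j by apply: contra ne => /eqP /key_inj ->.
case: (ltngtP (key plus g i) (key plus g j)) nk => // [] /rank_lt; rewrite e ltnn //.
Qed.

Lemma CM_exists (n m : nat) (plus : 'I_m -> bool) (g : {ffun 'I_n -> 'I_m}) :
  exists pi, CM plus g pi.
Proof.
pose r := perm (@rank_inj n m plus g).
exists (r^-1)%g; apply/forallP => u; apply/forallP => v; apply/implyP => uv.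
rewrite ltnNge; apply/negP => le.
have ne : key plus g (r^-1 v)%g != key plus g (r^-1 u)%g.
  apply/negP => /eqP /key_inj /perm_inj e; move: uv; rewrite e ltnn.
  done.
have lt : key plus g (r^-1 v)%g < key plus g (r^-1 u)%g by rewrite ltn_neqAle ne le.
move/rank_lt: lt.
have E w : rank plus g (r^-1 w)%g = w.
  by have := permKV r w; rewrite permE => /(congr1 val).
by rewrite !E ltnNge (ltnW uv).
Qed.

Lemma card_ord_lt (n p : nat) : p <= n -> #|[set q : 'I_n | q < p]| = p.
Proof.
move=> le; rewrite -sum1_card.
under eq_bigl => q do rewrite inE.
by rewrite (big_ord_narrow le) sum1_card card_ord.
Qed.

Lemma CM_rank (n m : nat) (plus : 'I_m -> bool) (g : {ffun 'I_n -> 'I_m}) (pi : 'S_n) :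
  CM plus g pi -> forall p, rank plus g (pi p) = p.
Proof.
move=> /forallP H p; rewrite /rank.
have -> : [set j | key plus g j < key plus g (pi p)] = pi @: [set q : 'I_n | q < p].
  apply/setP => j; rewrite inE.
  have -> : j = pi ((pi^-1)%g j) by rewrite permKV.
  rewrite (mem_imset _ _ (@perm_inj _ pi)) inE.
  case: (ltngtP ((pi^-1)%g j) p) => [lt|gt|/val_inj ->].
  - by have := H ((pi^-1)%g j) => /forallP /(_ p) /implyP /(_ lt) ->.
  - have := H p => /forallP /(_ ((pi^-1)%g j)) /implyP /(_ gt) h.
    by apply/negbTE; rewrite -leqNgt ltnW.
  - by rewrite ltnn.
by rewrite card_imset ?card_ord_lt 1?ltnW //; exact: perm_inj.
Qed.

Lemma CM_uniq (n m : nat) (plus : 'I_m -> bool) (g : {ffun 'I_n -> 'I_m}) (pi pi' : 'S_n) :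
  CM plus g pi -> CM plus g pi' -> pi = pi'.
Proof.
move=> h h'; apply/permP => p; apply: (@rank_inj n m plus g); apply: val_inj => /=.
by rewrite (CM_rank h) (CM_rank h').
Qed.

Definition sp (n m : nat) (plus : 'I_m -> bool) (g : {ffun 'I_n -> 'I_m}) : 'S_n :=
  odflt 1%g [pick pi | CM plus g pi].

Lemma CM_sp (n m : nat) (plus : 'I_m -> bool) (g : {ffun 'I_n -> 'I_m}) : CM plus g (sp plus g).
Proof.
rewrite /sp; case: pickP => [pi //|none].
by have [pi h] := CM_exists plus g; move: (none pi); rewrite h.
Qed.

Lemma CM_spE (n m : nat) (plus : 'I_m -> bool) (g : {ffun 'I_n -> 'I_m}) pi :
  CM plus g pi = (sp plus g == pi).
Proof.
apply/idP/eqP => [h|<-]; last exact: CM_sp.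
exact: CM_uniq (CM_sp plus g) h.
Qed.

Lemma consec_all (n : nat) (K : 'I_n -> nat) :
  [forall s : 'I_n, forall t : 'I_n, (nat_of_ord t == (nat_of_ord s).+1)%N ==> (K s < K t)] =
  [forall u : 'I_n, forall v : 'I_n, (u < v) ==> (K u < K v)].
Proof.
apply/idP/idP => /forallP H; apply/forallP => u; apply/forallP => v; apply/implyP => uv.
- have main : forall d (u v : 'I_n), nat_of_ord v = u + d.+1 -> K u < K v.
    elim=> [|d IH] u' v' e.
      by have := H u' => /forallP /(_ v') /implyP; apply; apply/eqP; lia.
    have wlt : u' + d.+1 < n by have := ltn_ord v'; lia.
    apply: (ltn_trans (IH u' (Ordinal wlt) erefl)).
    by have := H (Ordinal wlt) => /forallP /(_ v') /implyP; apply; apply/eqP => /=; lia.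
  by apply: (main (v - u.+1)); lia.
- by have := H u => /forallP /(_ v) /implyP; apply; move/eqP: uv => ->.
Qed.

Definition cond (n m : nat) (plus : 'I_m -> bool) (pi : 'S_n) (a : {ffun 'I_n -> 'I_m}) :=
  [forall s : 'I_n, forall t : 'I_n, (nat_of_ord t == (nat_of_ord s).+1)%N ==>
       [&& (a s <= a t)%N,
           ((pi s < pi t)%N ==>
              ((a s < a t)%N || ((a s == a t) && plus (a s)))) &
           ((pi t < pi s)%N ==>
              ((a s < a t)%N || ((a s == a t) && ~~ plus (a s))))]].

Lemma NcountE (n m : nat) (plus : 'I_m -> bool) (pi : 'S_n) :
  Ncount plus pi = #|[set a | cond plus pi a]|.
Proof. by []. Qed.

Definition Psi (n m : nat) (pi : 'S_n) (a : {ffun 'I_n -> 'I_m}) : {ffun 'I_n -> 'I_m} :=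
  [ffun i => a ((pi^-1)%g i)].

Lemma Psi_inj (n m : nat) (pi : 'S_n) : injective (@Psi n m pi).
Proof.
move=> a b e; apply/ffunP => s.
by have := congr1 (fun f : {ffun _ -> _} => f (pi s)) e; rewrite /Psi !ffunE permK.
Qed.

Lemma local_eq (n m : nat) (plus : 'I_m -> bool) (pi : 'S_n) (a : {ffun 'I_n -> 'I_m}) (s t : 'I_n) :
  s != t ->
  [&& (a s <= a t)%N,
           ((pi s < pi t)%N ==>
              ((a s < a t)%N || ((a s == a t) && plus (a s)))) &
           ((pi t < pi s)%N ==>
              ((a s < a t)%N || ((a s == a t) && ~~ plus (a s))))]
  = (key plus (Psi pi a) (pi s) < key plus (Psi pi a) (pi t)).
Proof.
move=> st.
have pst : pi s != pi t by apply: contra st => /eqP /perm_inj ->.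
rewrite key_lt_iff /Psi !ffunE !permK.
have hps := ltn_ord (pi s); have hpt := ltn_ord (pi t).
case: (ltngtP (a s) (a t)) => [lt|gt|/val_inj eq] /=.
- by rewrite !implybT.
- have ne : (a s == a t) = false by apply/negbTE; rewrite -val_eqE /= neq_ltn gt orbT.
  by rewrite ne.
- rewrite eq eqxx /=.
  have : nat_of_ord (pi s) != nat_of_ord (pi t) by [].
  case: (plus (a t)) => /=; case: (ltngtP (pi s) (pi t)) => //= *; lia.
Qed.

Lemma Ncount_CM (n m : nat) (plus : 'I_m -> bool) (pi : 'S_n) :
  Ncount plus pi = #|[set g | CM plus g pi]|.
Proof.
rewrite NcountE -[#|[set g | CM plus g pi]|](card_preimset _ (@Psi_inj n m pi)).
apply: eq_card => a; rewrite !inE /cond /CM.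
transitivity [forall s : 'I_n, forall t : 'I_n, (nat_of_ord t == (nat_of_ord s).+1)%N ==>
   (key plus (Psi pi a) (pi s) < key plus (Psi pi a) (pi t))]; last first.
  exact: (consec_all (fun u => key plus (Psi pi a) (pi u))).
apply: eq_forallb => s; apply: eq_forallb => t.
case: eqP => //= e; rewrite local_eq //.
by apply/eqP => st; move: e; rewrite st; lia.
Qed.

Lemma comb_lt (m1 m2 : nat) (plus2 : 'I_m2 -> bool) (z1 : 'I_m1) (z2 : 'I_m2) :
  z2 * m1 + (if plus2 z2 then nat_of_ord z1 else m1.-1 - z1) < m2 * m1.
Proof. have := ltn_ord z1; have := ltn_ord z2; case: (plus2 z2) => h1 h2; nia. Qed.

Definition comb (m1 m2 : nat) (plus2 : 'I_m2 -> bool) (z1 : 'I_m1) (z2 : 'I_m2) : 'I_(m2 * m1) :=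
  Ordinal (comb_lt plus2 z1 z2).

Lemma m1_pos (m1 m2 : nat) (z : 'I_(m2 * m1)) : 0 < m1.
Proof. have := ltn_ord z; case: m1 z => [|m1] z //; nia. Qed.

Lemma dec2_lt (m1 m2 : nat) (z : 'I_(m2 * m1)) : z %/ m1 < m2.
Proof. by rewrite ltn_divLR ?(m1_pos z). Qed.

Definition dec2 (m1 m2 : nat) (z : 'I_(m2 * m1)) : 'I_m2 := Ordinal (dec2_lt z).

Lemma dec1_lt (m1 m2 : nat) (plus2 : 'I_m2 -> bool) (z : 'I_(m2 * m1)) :
  (if plus2 (dec2 z) then z %% m1 else m1.-1 - z %% m1) < m1.
Proof. have := m1_pos z; have := ltn_pmod z (m1_pos z); case: (plus2 _); lia. Qed.

Definition dec1 (m1 m2 : nat) (plus2 : 'I_m2 -> bool) (z : 'I_(m2 * m1)) : 'I_m1 :=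
  Ordinal (dec1_lt plus2 z).

Lemma divmod_small (m1 q w : nat) : w < m1 -> (q * m1 + w) %/ m1 = q /\ (q * m1 + w) %% m1 = w.
Proof.
move=> lt; have pos : 0 < m1 by lia.
by rewrite divnMDl // divn_small // addn0 modnMDl modn_small.
Qed.

Lemma dec2_comb (m1 m2 : nat) (plus2 : 'I_m2 -> bool) (z1 : 'I_m1) (z2 : 'I_m2) :
  dec2 (comb plus2 z1 z2) = z2.
Proof.
apply: ord_inj => /=.
have lt : (if plus2 z2 then nat_of_ord z1 else m1.-1 - z1) < m1.
  by have := ltn_ord z1; case: (plus2 z2); lia.
by have [-> _] := divmod_small z2 lt.
Qed.

Lemma dec1_comb (m1 m2 : nat) (plus2 : 'I_m2 -> bool) (z1 : 'I_m1) (z2 : 'I_m2) :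
  dec1 plus2 (comb plus2 z1 z2) = z1.
Proof.
apply: ord_inj => /=; rewrite dec2_comb.
have lt : (if plus2 z2 then nat_of_ord z1 else m1.-1 - z1) < m1.
  by have := ltn_ord z1; case: (plus2 z2); lia.
have [_ ->] := divmod_small z2 lt.
by have := ltn_ord z1; case: (plus2 z2) => //; lia.
Qed.

Lemma comb_dec (m1 m2 : nat) (plus2 : 'I_m2 -> bool) (z : 'I_(m2 * m1)) :
  comb plus2 (dec1 plus2 z) (dec2 z) = z.
Proof.
apply: ord_inj => /=.
have := ltn_pmod z (m1_pos z); have := divn_eq z m1.
case: (plus2 _) => /=; lia.
Qed.

Lemma CM_lt (n m : nat) (plus : 'I_m -> bool) (g : {ffun 'I_n -> 'I_m}) (pi : 'S_n) (u v : 'I_n) :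
  CM plus g pi -> u < v -> key plus g (pi u) < key plus g (pi v).
Proof. by move=> /forallP /(_ u) /forallP /(_ v) /implyP. Qed.

Lemma ord_gtF (k : nat) (a b : 'I_k) : b < a -> (a == b) = false.
Proof. by move=> gt; apply/negbTE; rewrite -val_eqE /= neq_ltn gt orbT. Qed.

Lemma Phi_key (n m1 m2 : nat) (plus1 : 'I_m1 -> bool) (plus2 : 'I_m2 -> bool)
  (plusZ : 'I_(m2 * m1) -> bool)
  (HZ : forall z1 z2, plusZ (comb plus2 z1 z2) = (plus1 z1 == plus2 z2))
  (g1 : {ffun 'I_n -> 'I_m1}) (h : {ffun 'I_n -> 'I_m2}) (sigma tau : 'S_n) :
  CM plus1 g1 sigma -> CM plus2 h tau ->
  CM plusZ [ffun i => comb plus2 (g1 i) (h ((sigma^-1)%g i))] (tau * sigma)%g.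
Proof.
move=> Cs Ct; apply/forallP => u; apply/forallP => v; apply/implyP => uv.
rewrite !permM.
set U := tau u; set V := tau v.
have kt := CM_lt Ct uv; rewrite -/U -/V in kt.
have UV : U != V by apply/eqP => /perm_inj e; move: uv; rewrite e ltnn.
rewrite key_lt_iff !ffunE !permK HZ.
rewrite key_lt_iff in kt.
have hn1 := ltn_ord (sigma U); have hn2 := ltn_ord (sigma V).
have hz1 := ltn_ord (g1 (sigma U)); have hz2 := ltn_ord (g1 (sigma V)).
have hz3 := ltn_ord (h U); have hz4 := ltn_ord (h V).
case: (ltngtP (h U) (h V)) kt => [lt|gt|/ord_inj eq] /= kt.
- apply/orP; left; rewrite /=.
  case: (plus2 (h U)); case: (plus2 (h V)); nia.
- by rewrite ord_gtF in kt.
rewrite eq eqxx /= in kt *.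
have UVn : nat_of_ord U != nat_of_ord V by [].
have ne2 : nat_of_ord (sigma U) != nat_of_ord (sigma V).
  by apply/negP => /eqP /ord_inj /perm_inj e; move: UV; rewrite e eqxx.
case P2: (plus2 (h V)) kt => kt.
-
  have k1 := CM_lt Cs kt; rewrite key_lt_iff in k1.
  case: (ltngtP (g1 (sigma U)) (g1 (sigma V))) k1 => [lt|gt|/ord_inj e] /= k1.
  + by apply/orP; left; rewrite /=; lia.
  + by rewrite ord_gtF in k1.
  + rewrite e eqxx /= in k1 *.
    apply/orP; right; apply/andP; split; first exact/eqP.
    by rewrite eqb_id.
-
  have VU : V < U by move: kt; lia.
  have k1 := CM_lt Cs VU; rewrite key_lt_iff in k1.
  case: (ltngtP (g1 (sigma V)) (g1 (sigma U))) k1 => [lt|gt|/ord_inj e] /= k1.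
  + by apply/orP; left; rewrite /=; lia.
  + by rewrite ord_gtF in k1.
  + rewrite e eqxx /= in k1 *.
    apply/orP; right; apply/andP; split; first exact/eqP.
    by move: k1; case: (plus1 _) => /=; lia.
Qed.

Lemma card_sum (T : finType) (P : pred T) : #|[set x | P x]| = \sum_(x : T) (P x : nat).
Proof.
rewrite -sum1_card big_mkcond /=; apply: eq_bigr => x _; rewrite inE; by case: (P x).
Qed.

Lemma sum_by (T J : finType) (f : T -> J) (F : J -> nat) :
  \sum_(x : T) F (f x) = \sum_(s : J) #|[set x | f x == s]| * F s.
Proof.
rewrite (partition_big f predT) //=; apply: eq_bigr => s _.
rewrite (eq_bigr (fun _ => F s)); last by move=> x /eqP ->.
by rewrite sum_nat_const; congr (_ * _); apply: eq_card => x; rewrite !inE.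
Qed.

Definition Phi (n m1 m2 : nat) (plus1 : 'I_m1 -> bool) (plus2 : 'I_m2 -> bool)
  (x : {ffun 'I_n -> 'I_m1} * {ffun 'I_n -> 'I_m2}) : {ffun 'I_n -> 'I_(m2 * m1)} :=
  [ffun i => comb plus2 (x.1 i) (x.2 (((sp plus1 x.1)^-1)%g i))].

Lemma Phi_inj (n m1 m2 : nat) (plus1 : 'I_m1 -> bool) (plus2 : 'I_m2 -> bool) :
  injective (@Phi n m1 m2 plus1 plus2).
Proof.
move=> [x1 x2] [y1 y2] e.
have E i := congr1 (fun f : {ffun _ -> _} => f i) e.
have e1 : x1 = y1.
  apply/ffunP => i; have := congr1 (dec1 plus2) (E i); rewrite /Phi !ffunE /=.
  by rewrite !dec1_comb.
subst y1; congr (_, _); apply/ffunP => s.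
have := congr1 (@dec2 _ _) (E (sp plus1 x1 s)); rewrite /Phi !ffunE /= !dec2_comb.
by rewrite permK.
Qed.

Lemma Phi_surj (n m1 m2 : nat) (plus1 : 'I_m1 -> bool) (plus2 : 'I_m2 -> bool)
  (G : {ffun 'I_n -> 'I_(m2 * m1)}) : exists x, @Phi n m1 m2 plus1 plus2 x = G.
Proof.
pose g1 := [ffun i => dec1 plus2 (G i)].
exists (g1, [ffun s => dec2 (G (sp plus1 g1 s))]).
apply/ffunP => i; rewrite /Phi !ffunE /= permKV.
by rewrite -/g1 comb_dec.
Qed.

Lemma prod_count (n m1 m2 : nat) (plus1 : 'I_m1 -> bool) (plus2 : 'I_m2 -> bool)
  (plusZ : 'I_(m2 * m1) -> bool)
  (HZ : forall z1 z2, plusZ (comb plus2 z1 z2) = (plus1 z1 == plus2 z2)) (pi : 'S_n) :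
  \sum_(s : 'S_n) \sum_(t : 'S_n | Defs.pcomp s t == pi) Ncount plus1 s * Ncount plus2 t
  = Ncount plusZ pi.
Proof.
have spPhi x : sp plusZ (@Phi n m1 m2 plus1 plus2 x) = (sp plus2 x.2 * sp plus1 x.1)%g.
  apply/eqP; rewrite -CM_spE; apply: Phi_key => //; exact: CM_sp.
rewrite Ncount_CM.
have -> : [set G | CM plusZ G pi] =
    (@Phi n m1 m2 plus1 plus2) @: [set x | Defs.pcomp (sp plus1 x.1) (sp plus2 x.2) == pi].
  apply/setP => G; rewrite inE CM_spE; apply/eqP/imsetP.
  - move=> e; have [x ex] := Phi_surj plus1 plus2 G.
    by exists x; rewrite // inE /Defs.pcomp -spPhi ex e.
  - by move=> [x]; rewrite inE /Defs.pcomp -spPhi => /eqP <- ->.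
rewrite card_imset; last exact: Phi_inj.
rewrite card_sum.
rewrite -(pair_big predT predT (fun x1 x2 => (Defs.pcomp (sp plus1 x1) (sp plus2 x2) == pi : nat))) /=.
under eq_bigr => x1 _ do rewrite (sum_by (sp plus2) (fun t => (Defs.pcomp (sp plus1 x1) t == pi : nat))).
rewrite (sum_by (sp plus1) (fun s => \sum_t #|[set x | sp plus2 x == t]| * (Defs.pcomp s t == pi : nat))).
apply: eq_bigr => s _.
rewrite big_distrr /= big_mkcond /=; apply: eq_bigr => t _.
rewrite !Ncount_CM.
have -> : [set g | CM plus1 g s] = [set x | sp plus1 x == s].
  by apply/setP => g; rewrite !inE CM_spE.
have -> : [set g | CM plus2 g t] = [set x | sp plus2 x == t].
  by apply/setP => g; rewrite !inE CM_spE.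
by case: (Defs.pcomp s t == pi); rewrite ?muln1 ?muln0.
Qed.

Definition Pstrict (n M : nat) (c : {ffun 'I_n -> 'I_M}) :=
  [forall s : 'I_n, forall t : 'I_n, (nat_of_ord t == (nat_of_ord s).+1)%N ==> (c s < c t)].

Lemma Pstrict_sorted (n' M : nat) (c : {ffun 'I_n'.+1 -> 'I_M}) :
  Pstrict c = sorted ltn (map val (mktuple c)).
Proof.
apply/idP/idP.
- move=> /forallP H; apply/(sortedP 0) => i; rewrite size_map size_tuple => hi.
  have hi' : i < n'.+1 by lia.
  rewrite (nth_map (c ord0)) ?size_tuple // (nth_map (c ord0)) ?size_tuple //.
  rewrite -(tnth_nth _ _ (Ordinal hi')) -(tnth_nth _ _ (Ordinal hi)) !tnth_mktuple.
  by have := H (Ordinal hi') => /forallP /(_ (Ordinal hi)) /implyP; apply.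
- move=> /(sortedP 0) H; apply/forallP => s; apply/forallP => t; apply/implyP => /eqP e.
  have := H s; rewrite size_map size_tuple -e => /(_ (ltn_ord t)).
  have hs : s < n'.+1 := ltn_ord s.
  have ht : s.+1 < n'.+1 by rewrite -e.
  rewrite (nth_map (c ord0)) ?size_tuple // (nth_map (c ord0)) ?size_tuple //.
  by rewrite -!tnth_nth !tnth_mktuple.
Qed.

Lemma strict_count (n' M : nat) :
  #|[set c : {ffun 'I_n'.+1 -> 'I_M} | Pstrict c]| = 'C(M, n'.+1).
Proof.
rewrite -card_ltn_sorted_tuples.
have -> : [set t : n'.+1.-tuple 'I_M | sorted ltn (map val t)] =
   (fun c : {ffun 'I_n'.+1 -> 'I_M} => mktuple c) @: [set c | Pstrict c].
  apply/setP => t; rewrite inE; apply/idP/imsetP.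
  - move=> st.
    have ft : mktuple [ffun i => tnth t i] = t.
      by apply: eq_from_tnth => i; rewrite tnth_mktuple ffunE.
    by exists [ffun i => tnth t i]; rewrite ?inE ?Pstrict_sorted ft.
  - by move=> [c]; rewrite inE Pstrict_sorted => ? ->.
rewrite card_imset //.
move=> c1 c2 e; apply/ffunP => i.
by have := congr1 (fun t => tnth t i) e; rewrite /= !tnth_mktuple.
Qed.

Lemma consec_trans (n : nat) (R : rel nat) (Rtr : transitive R) (K : 'I_n -> nat) :
  (forall s t : 'I_n, nat_of_ord t = (nat_of_ord s).+1 -> R (K s) (K t)) ->
  forall u v : 'I_n, u < v -> R (K u) (K v).
Proof.
move=> H u v uv.
have main : forall d (u v : 'I_n), nat_of_ord v = u + d.+1 -> R (K u) (K v).
  elim=> [|d IH] u' v' e.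
    by apply: H; lia.
  have wlt : u' + d.+1 < n by have := ltn_ord v'; lia.
  apply: (Rtr _ _ _ (IH u' (Ordinal wlt) erefl)).
  by apply: H => /=; lia.
by apply: (main (v - u.+1)); lia.
Qed.

Lemma consec_lower (n : nat) (K : 'I_n -> nat) :
  (forall s t : 'I_n, nat_of_ord t = (nat_of_ord s).+1 -> K s < K t) ->
  forall s : 'I_n, nat_of_ord s <= K s.
Proof.
move=> H s; case: s => j hj /=.
elim: j hj => [|j IH] hj //.
have hj' : j < n by lia.
have := H (Ordinal hj') (Ordinal hj) erefl; have := IH hj'; lia.
Qed.

Definition Esum (n : nat) (d : 'I_n -> bool) (s : 'I_n) : nat :=
  \sum_(r : 'I_n | r < s) (~~ d r : nat).

Lemma Esum_step (n : nat) (d : 'I_n -> bool) (s t : 'I_n) :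
  nat_of_ord t = (nat_of_ord s).+1 -> Esum d t = Esum d s + ~~ d s.
Proof.
move=> e; rewrite /Esum (bigD1 s) /=; last by rewrite e.
rewrite addnC; congr (_ + _); apply: eq_bigl => r.
rewrite e ltnS -val_eqE /=; case: (ltngtP r s) => //=.
Qed.

Lemma Esum_le (n : nat) (d : 'I_n -> bool) (s : 'I_n) : Esum d s <= s.
Proof.
rewrite /Esum; apply: (@leq_trans (\sum_(r : 'I_n | r < s) 1)).
  by apply: leq_sum => r _; case: (d r).
rewrite (eq_bigl (fun r => r \in [set q : 'I_n | q < s])); last by move=> r; rewrite inE.
by rewrite sum1_card card_ord_lt // ltnW.
Qed.

Definition Aset (n k : nat) (d : 'I_n -> bool) :=
  [set a : {ffun 'I_n -> 'I_k} |
    [forall s : 'I_n, forall t : 'I_n, (nat_of_ord t == (nat_of_ord s).+1)%N ==> (a s + d s <= a t)]].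

Lemma shift_count (n' k : nat) (d : 'I_n'.+1 -> bool) :
  #|Aset k d| = 'C(k + Esum d ord_max, n'.+1).
Proof.
set e := Esum d ord_max.
have He : e <= n' by exact: (Esum_le d ord_max).
case: k => [|k'].
  rewrite bin_small; last by rewrite add0n; lia.
  apply: eq_card0 => a; rewrite inE; have := a ord0; by case.
rewrite addSn -(strict_count n' (k' + e).+1) /=.
have AE (a : {ffun 'I_n'.+1 -> 'I_k'.+1}) s t : a \in Aset k'.+1 d ->
    nat_of_ord t = (nat_of_ord s).+1 -> a s + d s <= a t.
  by rewrite inE => /forallP /(_ s) /forallP /(_ t) /implyP H e'; apply: H; apply/eqP.
have Kst (a : {ffun 'I_n'.+1 -> 'I_k'.+1}) : a \in Aset k'.+1 d ->
    forall s t : 'I_n'.+1, nat_of_ord t = (nat_of_ord s).+1 ->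
    a s + Esum d s < a t + Esum d t.
  move=> aA s t e'; rewrite (Esum_step d e'); have := AE a s t aA e'; case: (d s) => /=; lia.
have Kbound (a : {ffun 'I_n'.+1 -> 'I_k'.+1}) s : a \in Aset k'.+1 d -> a s + Esum d s <= k' + e.
  move=> aA.
  have lem : a s + Esum d s <= a ord_max + Esum d ord_max.
    case: (ltngtP s (@ord_max n')) => [lt|gt|eq].
    - apply: ltnW; exact: (consec_trans ltn_trans (K := fun s => a s + Esum d s) (Kst a aA) lt).
    - by move: gt => /=; have := ltn_ord s; lia.
    - by rewrite (ord_inj eq).
  by have := ltn_ord (a ord_max); rewrite -/e; lia.
pose f (a : {ffun 'I_n'.+1 -> 'I_k'.+1}) : {ffun 'I_n'.+1 -> 'I_(k' + e).+1} :=
  [ffun s => inord (a s + Esum d s)].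
have fE a s : a \in Aset k'.+1 d -> nat_of_ord (f a s) = a s + Esum d s.
  by move=> aA; rewrite ffunE inordK // ltnS Kbound.
have -> : [set c : {ffun 'I_n'.+1 -> 'I_(k' + e).+1} | Pstrict c] = f @: Aset k'.+1 d.
  apply/setP => c; rewrite inE; apply/idP/imsetP.
  - move=> cS.
    have cst s t : nat_of_ord t = (nat_of_ord s).+1 -> c s < c t.
      by move=> e'; move: cS => /forallP /(_ s) /forallP /(_ t) /implyP; apply; apply/eqP.
    have clow s : Esum d s <= c s.
      exact: (leq_trans (Esum_le d s) (consec_lower (K := fun s => nat_of_ord (c s)) cst s)).
    have Lst s t : nat_of_ord t = (nat_of_ord s).+1 -> (c s - Esum d s) + d s <= c t - Esum d t.
      move=> e'; rewrite (Esum_step d e'); have := cst s t e'; have := clow s.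
      case: (d s) => /=; lia.
    have Lb s : c s - Esum d s <= k'.
      have lem : c s - Esum d s <= c ord_max - Esum d ord_max.
        case: (ltngtP s (@ord_max n')) => [lt|gt|eq].
        - exact: (consec_trans leq_trans (K := fun s => c s - Esum d s)
                    (fun s t e' => leq_trans (leq_addr _ _) (Lst s t e')) lt).
        - by move: gt => /=; have := ltn_ord s; lia.
        - by rewrite (ord_inj eq).
      by have := ltn_ord (c ord_max); rewrite -/e; lia.
    pose a : {ffun 'I_n'.+1 -> 'I_k'.+1} := [ffun s => inord (c s - Esum d s)].
    have aE s : nat_of_ord (a s) = c s - Esum d s by rewrite ffunE inordK // ltnS.
    have aA : a \in Aset k'.+1 d.
      rewrite inE; apply/forallP => s; apply/forallP => t; apply/implyP => /eqP e'.
      by rewrite !aE; exact: Lst.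
    exists a => //; apply/ffunP => s; apply: ord_inj; rewrite fE // aE.
    by have := clow s; lia.
  - move=> [a aA ->]; apply/forallP => s; apply/forallP => t; apply/implyP => /eqP e'.
    by rewrite !fE //; exact: Kst.
rewrite card_in_imset // => a b aA bA eab; apply/ffunP => s; apply: ord_inj.
have := congr1 (fun g : {ffun _ -> _} => nat_of_ord (g s)) eab; rewrite /= !fE //; move/eqP; rewrite eqn_add2r => /eqP h; exact h.
Qed.

Definition dd (n : nat) (tau : 'S_n) (s : 'I_n) : bool :=
  [exists t : 'I_n, (nat_of_ord t == (nat_of_ord s).+1) && (tau t < tau s)].

Lemma dd_eq (n : nat) (tau : 'S_n) (s t : 'I_n) :
  nat_of_ord t = (nat_of_ord s).+1 -> dd tau s = (tau t < tau s).
Proof.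
move=> e; apply/existsP/idP => [[t' /andP [/eqP e' h]]|h].
  by have -> : t = t' by apply: ord_inj; rewrite e e'.
by exists t; rewrite e eqxx.
Qed.

Lemma plain_Aset (n k : nat) (tau : 'S_n) :
  Ncount (fun _ : 'I_k => true) tau = #|Aset k (dd tau)|.
Proof.
rewrite NcountE; apply: eq_card => a; rewrite !inE /cond.
apply: eq_forallb => s; apply: eq_forallb => t.
case: eqP => //= e; rewrite (dd_eq tau e).
have ne : nat_of_ord (tau s) != nat_of_ord (tau t).
  apply/negP => /eqP /ord_inj /perm_inj st; move: e; rewrite st; lia.
rewrite andbT andbF orbF.
set x := a s; set y := a t.
case: (ltngtP x y) => [lt|gt|/ord_inj eq].
- rewrite !implybT /=; apply/esym/idP; case: (tau t < tau s) => /=; lia.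
- case: (tau t < tau s) => /=; apply/esym/negbTE; rewrite -ltnNge; lia.
- rewrite eq eqxx /=.
  move: ne; case: (ltngtP (tau s) (tau t)) => //= *; apply/esym; apply/idP; try lia.
  all: apply/negP; lia.
Qed.

Local Open Scope ring_scope.

Definition binpoly (c n : nat) : {poly rat} :=
  (n`!%:R)^-1 *: \prod_(i < n) ('X + (c%:R - i%:R)%:P).

Lemma binpolyE (c n k : nat) : (binpoly c n).[k%:R] = ('C(k + c, n))%:R.
Proof.
rewrite /binpoly hornerZ horner_prod.
under eq_bigr do rewrite hornerD hornerX hornerC.
have prodE : \prod_(i < n) ((k%:R : rat) + (c%:R - i%:R)) = ((k + c) ^_ n)%:R.
  case: (leqP n (k + c)) => [le|lt].
    rewrite ffact_prod natr_prod; apply: eq_bigr => i _.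
    rewrite natrB; last by have := ltn_ord i; lia.
    by rewrite natrD addrA.
  rewrite ffact_small // (bigD1 (Ordinal lt)) //= addrA -natrD subrr mul0r //.
rewrite prodE -bin_ffact natrM mulrC mulfK //.
by rewrite Num.Theory.pnatr_eq0 -lt0n fact_gt0.
Qed.

Lemma plain_poly (n : nat) (tau : 'S_n) : (1 <= n)%N ->
  exists B : {poly rat}, forall k : nat, B.[k%:R] = (Ncount (fun _ : 'I_k => true) tau)%:R.
Proof.
case: n tau => [|n'] tau // _.
exists (binpoly (Esum (dd tau) ord_max) n'.+1) => k.
by rewrite binpolyE plain_Aset shift_count.
Qed.

Local Close Scope ring_scope.

Local Open Scope ring_scope.

Definition eval2 (u v : rat) (F : {poly {poly rat}}) : rat :=
  (horner_eval v \o map_poly (horner_eval u)) F.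


Lemma eval2_ev2 (u v : rat) (P : {poly rat}) (t : {poly {poly rat}}) :
  eval2 u v (ev2 P t) = P.[eval2 u v t].
Proof.
rewrite /eval2 /ev2.
set f : {rmorphism {poly {poly rat}} -> rat} := (horner_eval v \o map_poly (horner_eval u)).
rewrite -/(f _) -/(f t) -horner_map /=.
congr (_.[_]); apply/polyP => i; rewrite !coef_map /=.
rewrite coef_map_id0 ?map_polyC /= ?map_polyC; last by rewrite !polyC0.
by rewrite /horner_eval /= !hornerC.
Qed.

Lemma poly_zero (p : {poly rat}) : (forall b, (0 < b)%N -> p.[(2 * b)%:R] = 0) -> p = 0.
Proof.
move=> H; apply/eqP; apply/negPn/negP => nz.
set rs := [seq ((2 * b.+1)%N)%:R | b <- iota 0 (size p)] : seq rat.
have h1 : all (root p) rs.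
  by apply/allP => x /mapP [b _ ->]; apply/rootP; apply: H.
have h2 : uniq rs.
  rewrite map_inj_uniq ?iota_uniq // => b c /eqP.
  by rewrite Num.Theory.eqr_nat => /eqP; lia.
by have := max_poly_roots nz h1 h2; rewrite size_map size_iota ltnn.
Qed.

Lemma poly2_zero (F : {poly {poly rat}}) :
  (forall a b, (0 < a)%N -> (0 < b)%N -> eval2 (2 * a)%N%:R (2 * b)%N%:R F = 0) -> F = 0.
Proof.
move=> H; apply/polyP => i; rewrite coef0.
apply: poly_zero => a a0.
have : map_poly (horner_eval (2 * a)%N%:R) F = 0.
  by apply: poly_zero => b b0; exact: H.
move/(congr1 (fun q : {poly rat} => q`_i)); rewrite coef_map /= coef0.
by rewrite horner_evalE.
Qed.

Local Close Scope ring_scope.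

Lemma prod_count' (n m m1 m2 : nat) (e : m = (m2 * m1)%N)
  (plus1 : 'I_m1 -> bool) (plus2 : 'I_m2 -> bool) (plusZ : 'I_m -> bool)
  (HZ : forall (z1 : 'I_m1) (z2 : 'I_m2) (z : 'I_m),
     nat_of_ord z = (z2 * m1 + (if plus2 z2 then nat_of_ord z1 else m1.-1 - z1))%N ->
     plusZ z = (plus1 z1 == plus2 z2)) (pi : 'S_n) :
  (\sum_(s : 'S_n) \sum_(t : 'S_n | Defs.pcomp s t == pi) Ncount plus1 s * Ncount plus2 t)%N
  = Ncount plusZ pi.
Proof. subst m; apply: prod_count => z1 z2; exact: HZ. Qed.

Lemma HZ_odd (a : nat) (neg1 p2 : bool) (z1 z2 z : nat) : (z1 < 2 * a)%N ->
  z = (z2 * (2 * a) + (if p2 then z1 else (2 * a).-1 - z1))%N ->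
  neg1 (+) odd z = ((neg1 (+) odd z1) == p2).
Proof.
move=> lt ->; rewrite oddD !oddM /= andbF /=.
case: p2 => /=; first by rewrite eqb_id.
rewrite oddB; last by lia.
have e2 : ((2 * a).-1 = (2 * a.-1).+1)%N by lia.
rewrite e2 /= oddM /=.
by case: neg1; case: (odd z1).
Qed.

Lemma omega_prod (n a b : nat) (neg1 neg2 : bool) (pi : 'S_n) :
  (\sum_(s : 'S_n) \sum_(t : 'S_n | Defs.pcomp s t == pi)
     Ncount (fun z : 'I_(2 * a) => neg1 (+) odd z) s *
     Ncount (fun z : 'I_(2 * b) => neg2 (+) odd z) t)%N
  = Ncount (fun z : 'I_(2 * (2 * a * b)) => neg1 (+) odd z) pi.
Proof.
apply: prod_count'; first by lia.
by move=> z1 z2 z ez; exact: HZ_odd (ltn_ord z1) ez.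
Qed.

Lemma omega_plain (n k : nat) (neg1 : bool) (pi : 'S_n) :
  Ncount (fun z : 'I_(2 * k) => neg1 (+) odd z) pi =
  (\sum_(s : 'S_n) \sum_(t : 'S_n | Defs.pcomp s t == pi)
     Ncount (fun z : 'I_(2 * 1) => neg1 (+) odd z) s *
     Ncount (fun _ : 'I_k => true) t)%N.
Proof.
symmetry; apply: prod_count'; first by rewrite mulnC.
by move=> z1 z2 z ez; exact: (@HZ_odd 1 neg1 true z1 z2 z (ltn_ord z1) ez).
Qed.

Local Open Scope ring_scope.

Lemma interp_exists (n : nat) (hn : (1 <= n)%N) (neg1 : bool) (pi : 'S_n) :
  exists P : {poly rat}, interpolates P (fun k => Ncount (fun z : 'I_(2 * k) => neg1 (+) odd z) pi).
Proof.
have [B HB] := fin_all_exists (fun t : 'S_n => plain_poly t hn).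
exists (\sum_(s : 'S_n) \sum_(t : 'S_n | Defs.pcomp s t == pi)
     (Ncount (fun z : 'I_(2 * 1) => neg1 (+) odd z) s)%:R *: B t).
move=> k _; rewrite omega_plain natr_sum horner_sum; apply: eq_bigr => s _.
rewrite natr_sum horner_sum; apply: eq_bigr => t _.
by rewrite hornerZ HB natrM.
Qed.

Lemma eval2_const (u v : rat) (c : rat) : eval2 u v c%:P%:P = c.
Proof. by rewrite /eval2 /= map_polyC /= !horner_evalE !hornerC. Qed.

Lemma eval2_half (u v : rat) : eval2 u v half2 = 2%:R^-1.
Proof. exact: eval2_const. Qed.

Lemma eval2_x (u v : rat) : eval2 u v xvar = u.
Proof. by rewrite /eval2 /xvar /= map_polyC /= !horner_evalE hornerX hornerC. Qed.

Lemma eval2_y (u v : rat) : eval2 u v yvar = v.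
Proof. by rewrite /eval2 /yvar /= map_polyX /horner_eval hornerX. Qed.

Lemma eq2 (F G : {poly {poly rat}}) :
  (forall a b, (0 < a)%N -> (0 < b)%N ->
     eval2 (2 * a)%N%:R (2 * b)%N%:R F = eval2 (2 * a)%N%:R (2 * b)%N%:R G) -> F = G.
Proof.
move=> H; apply/eqP; rewrite -subr_eq0; apply/eqP/poly2_zero => a b ha hb.
rewrite /eval2 rmorphB /=; move: (H a b ha hb); rewrite /eval2 /= => ->; by rewrite subrr.
Qed.

Local Open Scope ring_scope.

Lemma eval2_sum (u v : rat) (I : finType) (Pp : pred I) (F : I -> {poly {poly rat}}) :
  eval2 u v (\sum_(i | Pp i) F i) = \sum_(i | Pp i) eval2 u v (F i).
Proof. exact: rmorph_sum. Qed.

Lemma eval2M (u v : rat) (F G : {poly {poly rat}}) : eval2 u v (F * G) = eval2 u v F * eval2 u v G.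
Proof. exact: rmorphM. Qed.

Lemma half_nat (a : nat) : (2%:R : rat)^-1 * (2 * a)%N%:R = a%:R.
Proof. by rewrite natrM mulrA mulVf ?mul1r. Qed.

Lemma half_nat2 (a b : nat) : (2%:R : rat)^-1 * ((2 * a)%N%:R * (2 * b)%N%:R) = (2 * a * b)%N%:R.
Proof. by rewrite mulrA half_nat -natrM mulnCA mulnA. Qed.

Lemma main_id (n : nat) (neg1 neg2 : bool) (P1 P2 : 'S_n -> {poly rat})
  (H1 : forall pi, interpolates (P1 pi) (fun k => Ncount (fun z : 'I_(2 * k) => neg1 (+) odd z) pi))
  (H2 : forall pi, interpolates (P2 pi) (fun k => Ncount (fun z : 'I_(2 * k) => neg2 (+) odd z) pi))
  (pi : 'S_n) :
  gprod_coef (fun s => ev2 (P1 s) (half2 * xvar)) (fun t => ev2 (P2 t) (half2 * yvar)) pi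
  = ev2 (P1 pi) (half2 * (xvar * yvar)).
Proof.
apply: eq2 => a b ha hb; rewrite /gprod_coef eval2_sum.
under eq_bigr => s _ do rewrite eval2_sum.
under eq_bigr => s _ do under eq_bigr => t _ do
  rewrite eval2M !eval2_ev2 !eval2M eval2_half eval2_x eval2_y !half_nat H1 // H2 //.
rewrite eval2_ev2 !eval2M eval2_half eval2_x eval2_y half_nat2 H1; last first.
  by rewrite !muln_gt0 ha hb.
rewrite -(omega_prod a b neg1 neg2) natr_sum; apply: eq_bigr => s _.
rewrite natr_sum; apply: eq_bigr => t _; by rewrite natrM.
Qed.

Unset Implicit Arguments.

Theorem theorem3p1 (n : nat) (hn : (1 <= n)%N) :
  (exists P : 'S_n -> {poly rat}, forall pi, interpolates (P pi) (Omega' pi)) /\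
  (exists Q : 'S_n -> {poly rat}, forall pi, interpolates (Q pi) (Omega'bar pi)) /\
  forall P Q : 'S_n -> {poly rat},
    (forall pi, interpolates (P pi) (Omega' pi)) ->
    (forall pi, interpolates (Q pi) (Omega'bar pi)) ->
    forall pi : 'S_n,
      [/\ gprod_coef (fun s => ev2 (P s) (half2 * xvar))
                     (fun t => ev2 (P t) (half2 * yvar)) pi
            = ev2 (P pi) (half2 * (xvar * yvar)),
          gprod_coef (fun s => ev2 (Q s) (half2 * xvar))
                     (fun t => ev2 (Q t) (half2 * yvar)) pi
            = ev2 (Q pi) (half2 * (xvar * yvar)),
          gprod_coef (fun s => ev2 (Q s) (half2 * xvar))
                     (fun t => ev2 (P t) (half2 * yvar)) pi
            = ev2 (Q pi) (half2 * (xvar * yvar)) &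
          gprod_coef (fun s => ev2 (P s) (half2 * xvar))
                     (fun t => ev2 (Q t) (half2 * yvar)) pi
            = ev2 (P pi) (half2 * (xvar * yvar))].
Proof.
split; [|split].
- have [P HP] := fin_all_exists (fun pi : 'S_n => interp_exists hn false pi).
  by exists P => pi; exact: HP.
- have [Q HQ] := fin_all_exists (fun pi : 'S_n => interp_exists hn true pi).
  by exists Q => pi; exact: HQ.
move=> P Q HP HQ pi; split.
- exact: (@main_id n false false P P HP HP).
- exact: (@main_id n true true Q Q HQ HQ).
- exact: (@main_id n true false Q P HQ HP).
- exact: (@main_id n false true P Q HP HQ).
Qed.
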